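(* Let $r_1,r_2,r_3$ be pairwise distinct odd positive integers such that for every $i\in[3]$, $r_i\notin\{1,\lfloor (r_1+r_2+r_3)/2\rfloor,\lceil (r_1+r_2+r_3)/2\rceil\}$. Let $G=K_{r_1,r_2,r_3}$ be the complete 3-partite graph with part sizes $r_1,r_2,r_3$. Then for every bisection $H$ of $G$ there exists a vertex $v\in V(G)$ with $d_H(v)<(d_G(v)-1)/2$.
   Context: A bisection of a graph $G$ is a bipartite spanning subgraph $H$ of $G$ with a bipartition into two partition sets (every edge of $H$ joining the two sets) whose sizes differ by at most one. $d_G(v)$ denotes the degree of $v$ in $G$. *)

(* Defs.v *)
From mathcomp Require Import all_boot.
Set Implicit Arguments. Unset Strict Implicit. Unset Printing Implicit Defensive.

(* Vertices of K_{r1,r2,r3}: 'I_(r1+r2+r3); vertex v lies in part 0 if v < r1,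
   part 1 if r1 <= v < r1+r2, part 2 otherwise. *)
Definition part (r1 r2 : nat) (v : nat) : nat :=
  if v < r1 then 0 else if v < r1 + r2 then 1 else 2.

Arguments part : clear implicits.
Definition K3 (r1 r2 r3 : nat) : rel 'I_(r1 + r2 + r3) :=
  fun u v => part r1 r2 u != part r1 r2 v.

Definition deg (T : finType) (e : rel T) (v : T) : nat := #|[set u | e v u]|.

Definition is_bisection (T : finType) (G H : rel T) : Prop :=
  (forall u v, H u v -> G u v) /\
  (forall u v, H u v = H v u) /\
  exists A : {set T},
    #|A| <= #|~: A| + 1 /\ #|~: A| <= #|A| + 1 /\
    (forall u v, H u v -> (u \in A) != (v \in A)).
Arguments K3 : clear implicits.

(* Main.v *)
Require Import Defs.
From mathcomp Require Import all_boot zify.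

Lemma cardQ n k : k <= n -> #|[set u : 'I_n | u < k]| = k.
Proof.
move=> kn.
have -> : [set u : 'I_n | u < k] = widen_ord kn @: [set: 'I_k].
  apply/setP => u; rewrite inE; apply/idP/imsetP.
  - by move=> uk; exists (Ordinal uk) => //; apply: val_inj.
  - by case=> w _ ->; rewrite /= ltn_ord.
rewrite card_imset ?cardsT ?card_ord //.
by move=> x y /(congr1 val) /= /val_inj.
Qed.

Definition Pset r1 r2 r3 (i : nat) : {set 'I_(r1 + r2 + r3)} :=
  [set u : 'I_(r1 + r2 + r3) | part r1 r2 u == i].

Lemma split3 r1 r2 r3 (S : {set 'I_(r1 + r2 + r3)}) :
  #|S| = #|S :&: Pset r1 r2 r3 0| + #|S :&: Pset r1 r2 r3 1|
         + #|S :&: Pset r1 r2 r3 2|.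
Proof.
rewrite -(cardsID (Pset r1 r2 r3 0) S) -(cardsID (Pset r1 r2 r3 1) (S :\: _)).
have -> : (S :\: Pset r1 r2 r3 0) :&: Pset r1 r2 r3 1 = S :&: Pset r1 r2 r3 1.
  apply/setP => u; rewrite !inE /part.
  by case: (u < r1); case: (u < r1 + r2); case: (u \in S).
have -> : (S :\: Pset r1 r2 r3 0) :\: Pset r1 r2 r3 1 = S :&: Pset r1 r2 r3 2.
  apply/setP => u; rewrite !inE /part.
  by case: (u < r1); case: (u < r1 + r2); case: (u \in S).
by rewrite addnA.
Qed.

Lemma cardsIC (T : finType) (A S : {set T}) : #|A :&: S| + #|~:A :&: S| = #|S|.
Proof. by rewrite -(cardsID A S) (setIC S A) setDE (setIC S (~:A)). Qed.

Lemma cardP r1 r2 r3 :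
  [/\ #|Pset r1 r2 r3 0| = r1, #|Pset r1 r2 r3 1| = r2 & #|Pset r1 r2 r3 2| = r3].
Proof.
have h0 : Pset r1 r2 r3 0 = [set u : 'I_(r1 + r2 + r3) | u < r1].
  by apply/setP => u; rewrite !inE /part; case: (u < r1); case: (u < r1 + r2).
have c0 : #|Pset r1 r2 r3 0| = r1 by rewrite h0 cardQ //; lia.
have c01 : #|Pset r1 r2 r3 0| + #|Pset r1 r2 r3 1| = r1 + r2.
  rewrite -[RHS](@cardQ (r1 + r2 + r3)) ?leq_addr //.
  rewrite (@split3 _ _ _ ([set u : 'I_(r1 + r2 + r3) | u < r1 + r2])).
  have -> : [set u : 'I_(r1 + r2 + r3) | u < r1 + r2] :&: Pset r1 r2 r3 2 = set0.
    apply/setP => u; rewrite !inE /part.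
    by case: (u < r1); case E: (u < r1 + r2).
  have -> : [set u : 'I_(r1 + r2 + r3) | u < r1 + r2] :&: Pset r1 r2 r3 0 = Pset r1 r2 r3 0.
    apply/setP => u; rewrite !inE /part.
    case E1: (u < r1); case E: (u < r1 + r2) => //; lia.
  have -> : [set u : 'I_(r1 + r2 + r3) | u < r1 + r2] :&: Pset r1 r2 r3 1 = Pset r1 r2 r3 1.
    apply/setP => u; rewrite !inE /part.
    by case E1: (u < r1); case E: (u < r1 + r2).
  by rewrite cards0 addn0.
have ct := @split3 _ _ _ [set: 'I_(r1 + r2 + r3)].
rewrite !setTI cardsT card_ord in ct.
split; lia.
Qed.

Lemma degG r1 r2 r3 (v : 'I_(r1 + r2 + r3)) :
  deg (K3 r1 r2 r3) v = r1 + r2 + r3 - #|Pset r1 r2 r3 (part r1 r2 v)|.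
Proof.
rewrite /deg.
have -> : [set u | K3 r1 r2 r3 v u] = ~: Pset r1 r2 r3 (part r1 r2 v).
  by apply/setP => u; rewrite !inE /K3 eq_sym.
have := cardsC (Pset r1 r2 r3 (part r1 r2 v)); rewrite card_ord. set x := #|Pset _ _ _ _|; set y := #|~: _|; move=> h; lia.
Qed.

Lemma side r1 r2 r3 (H : rel 'I_(r1 + r2 + r3)) (S : {set 'I_(r1 + r2 + r3)}) i :
  (forall u v, H u v -> K3 r1 r2 r3 u v) ->
  (forall u v, H u v -> (u \in S) != (v \in S)) ->
  (forall v, deg (K3 r1 r2 r3) v <= (deg H v).*2 + 1) ->
  #|S :&: Pset r1 r2 r3 i| = 0 \/
  r1 + r2 + r3 - #|Pset r1 r2 r3 i| <=
     (#|~: S| - #|~: S :&: Pset r1 r2 r3 i|).*2 + 1.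
Proof.
move=> hsub hsep hH.
case: (posnP #|S :&: Pset r1 r2 r3 i|) => [->|]; first by left.
rewrite card_gt0 => /set0Pn [v]; rewrite !inE => /andP [vS /eqP pv].
right; have := hH v; rewrite degG pv.
have le : deg H v <= #|~: S :&: ~: Pset r1 r2 r3 i|.
  apply: subset_leq_card; apply/subsetP => u; rewrite !inE => Hvu.
  have := hsep _ _ Hvu; rewrite vS /= => ->.
  by have := hsub _ _ Hvu; rewrite /K3 pv eq_sym.
have := cardsID (Pset r1 r2 r3 i) (~: S); rewrite setDE.
lia.
Qed.

Lemma part_arith n a b ai bi r : a + b = n -> ai + bi = r -> ai <= a -> bi <= b -> odd (a+b) -> odd r ->
  (ai = 0 \/ n - r <= (b - bi).*2 + 1) -> (bi = 0 \/ n - r <= (a - ai).*2 + 1) ->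
  [\/ ai = 0, bi = 0 | a + bi = b + ai].
Proof.
move=> <- e la lb oab or.
have := odd_double_half r; have := odd_double_half (a+b). rewrite oab or /=.
move: (r./2) ((a+b)./2) => k q q1 q2.
case: (posnP ai) => [->|pa]; first by move=> *; apply: Or31.
case: (posnP bi) => [->|pb]; first by move=> *; apply: Or32.
move=> A B; apply: Or33.
case: A => A; first lia. case: B => B; first lia. lia.
Qed.

Lemma arith n r1 r2 r3 a0 a1 a2 b0 b1 b2 a b : a + b = n ->
  a0 + b0 = r1 -> a1 + b1 = r2 -> a2 + b2 = r3 ->
  a = a0 + a1 + a2 -> b = b0 + b1 + b2 -> a <= b + 1 -> b <= a + 1 ->
  odd (a + b) ->
  r1 <> r2 -> r1 <> r3 -> r2 <> r3 -> r1 <> 1 -> r2 <> 1 -> r3 <> 1 ->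
  r1.*2 + 1 <> n -> r2.*2 + 1 <> n -> r3.*2 + 1 <> n ->
  r1.*2 <> n + 1 -> r2.*2 <> n + 1 -> r3.*2 <> n + 1 ->
  [\/ a0 = 0, b0 = 0 | a + b0 = b + a0] ->
  [\/ a1 = 0, b1 = 0 | a + b1 = b + a1] ->
  [\/ a2 = 0, b2 = 0 | a + b2 = b + a2] ->
  odd r1 -> odd r2 -> odd r3 -> False.
Proof.
move=> <- e0 e1 e2 ea eb h1 h2 oab d12 d13 d23 n1 n2 n3 m1 m2 m3 p1 p2 p3 A0 A1 A2 o1 o2 o3.
have := odd_double_half (a+b). rewrite oab /=.
move: ((a+b)./2) => k q.
have z1 : r1 <> 0 by move=> z; rewrite z in o1.
have z2 : r2 <> 0 by move=> z; rewrite z in o2.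
have z3 : r3 <> 0 by move=> z; rewrite z in o3.
subst a b.
case: A0 => A0; case: A1 => A1; case: A2 => A2; lia.
Qed.

Theorem proposition1p2 (r1 r2 r3 : nat) :
  odd r1 -> odd r2 -> odd r3 ->
  r1 != r2 -> r1 != r3 -> r2 != r3 ->
  (forall r, r \in [:: r1; r2; r3] ->
     r \notin [:: 1; (r1 + r2 + r3)./2; uphalf (r1 + r2 + r3)]) ->
  forall H : rel 'I_(r1 + r2 + r3),
    is_bisection (K3 r1 r2 r3) H ->
    exists v : 'I_(r1 + r2 + r3),
      (deg H v).*2 + 1 < deg (K3 r1 r2 r3) v.
Proof.
move=> o1 o2 o3 /eqP d12 /eqP d13 /eqP d23 hr H [hsub [hsym [A [hA1 [hA2 hsep]]]]].
case: (pickP (fun v => (deg H v).*2 + 1 < deg (K3 r1 r2 r3) v)) => [v hv|hall].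
  by exists v.
have hH : forall v, deg (K3 r1 r2 r3) v <= (deg H v).*2 + 1.
  by move=> v; rewrite leqNgt hall.
have hsep' : forall u v, H u v -> (u \in ~: A) != (v \in ~: A).
  by move=> u v /hsep; rewrite !inE; case: (u \in A); case: (v \in A).
have [c0 c1 c2] := cardP r1 r2 r3.
have [a0 b0] := (side _ _ _ _ _ 0 hsub hsep hH, side _ _ _ _ _ 0 hsub hsep' hH).
have [a1 b1] := (side _ _ _ _ _ 1 hsub hsep hH, side _ _ _ _ _ 1 hsub hsep' hH).
have [a2 b2] := (side _ _ _ _ _ 2 hsub hsep hH, side _ _ _ _ _ 2 hsub hsep' hH).
rewrite setCK in b0 b1 b2.
have e0 := @cardsIC _ A (Pset r1 r2 r3 0).
have e1 := @cardsIC _ A (Pset r1 r2 r3 1).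
have e2 := @cardsIC _ A (Pset r1 r2 r3 2).
rewrite c0 c1 c2 in a0 a1 a2 b0 b1 b2 e0 e1 e2.
have sA := @split3 _ _ _ A. have sB := @split3 _ _ _ (~: A).
have := cardsC A; rewrite card_ord => eAB.
have h1 := hr r1 ltac:(by rewrite inE eqxx).
have h2 := hr r2 ltac:(by rewrite !inE eqxx orbT).
have h3 := hr r3 ltac:(by rewrite !inE eqxx !orbT).
rewrite !inE !negb_or in h1 h2 h3.
case/and3P: h1 => /eqP n11 /eqP n12 /eqP n13.
case/and3P: h2 => /eqP n21 /eqP n22 /eqP n23.
case/and3P: h3 => /eqP n31 /eqP n32 /eqP n33.
rewrite uphalf_half in n13 n23 n33.
have on : odd (r1 + r2 + r3) by rewrite !oddD o1 o2 o3.
rewrite on in n13 n23 n33.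
have hn := odd_double_half (r1 + r2 + r3); rewrite on in hn.
rewrite /= in hn n13 n23 n33.
move: ((r1 + r2 + r3)./2) hn n12 n13 n22 n23 n32 n33 => k hn n12 n13 n22 n23 n32 n33.
have oab : odd (#|A| + #|~: A|) by rewrite eAB.
have le := fun (S P : {set 'I_(r1 + r2 + r3)}) => subset_leq_card (subsetIl S P).
have q0 := part_arith _ _ _ _ _ _ eAB e0 (le _ _) (le _ _) oab o1 a0 b0.
have q1 := part_arith _ _ _ _ _ _ eAB e1 (le _ _) (le _ _) oab o2 a1 b1.
have q2 := part_arith _ _ _ _ _ _ eAB e2 (le _ _) (le _ _) oab o3 a2 b2.
clear a0 a1 a2 b0 b1 b2 le hH hall hsep hsep' hsub hsym hr; exfalso; apply: (arith _ _ _ _ _ _ _ _ _ _ _ _ eAB e0 e1 e2 sA sB hA1 hA2 oab _ _ _ _ _ _ _ _ _ _ _ _ q0 q1 q2 o1 o2 o3); lia.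
Qed.
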